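(* Let $\mathcal{C}_3=\mathbb{C}\{e_1,e_2,e_3\}$ be the complex Clifford algebra with generators satisfying $e_j^2=-1$ and $e_je_k=-e_ke_j$ ($j\neq k$), of dimension $8$, and let $e_{[3]}=e_1e_2e_3$, so that $e_{[3]}^2=1$. Let $\mathcal{C}_2\subset\mathcal{C}_3$ be the subalgebra with basis $1,e_1,e_2,e_{12}=e_1e_2$. Then every $a\in\mathcal{C}_3$ can be written as $a=a_0+a_1e_{[3]}$ with $a_0,a_1\in\mathcal{C}_2$. Define $\overline{a}=a_0-a_1e_{[3]}$ and $D_a=\mathrm{diag}(aI_2,\overline{a}I_2)$. Let $$P_2=\frac12\begin{pmatrix}1-ie_1 & e_2+ie_{12}\\ -e_2+ie_{12} & 1+ie_1\end{pmatrix}\ (=P_2^{-1}),$$ $$P_3=\frac12\begin{pmatrix}(1+e_{[3]})P_2 & -(1-e_{[3]})P_2\\ (1-e_{[3]})P_2 & (1+e_{[3]})P_2\end{pmatrix},\qquad P_3'=\frac12\begin{pmatrix}P_2^{-1}(1+e_{[3]}) & P_2^{-1}(1-e_{[3]})\\ -P_2^{-1}(1-e_{[3]}) & P_2^{-1}(1+e_{[3]})\end{pmatrix}.$$ Then $P_3$ is invertible with $P_3^{-1}=P_3'$, and $$P_3D_aP_3^{-1}=\begin{pmatrix}\phi_2(a_0)+\phi_2(a_1) & 0\\ 0 & \phi_2(a_0)-\phi_2(a_1)\end{pmatrix},$$ a block diagonal matrix with two $2\times 2$ complex blocks.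
   Context: For $b=b_0+b_1e_1+b_2e_2+b_3e_{12}\in\mathcal{C}_2$ ($b_j\in\mathbb{C}$), $\phi_2(b)=\begin{pmatrix}b_0+b_1i & -(b_2+b_3i)\\ b_2-b_3i & b_0-b_1i\end{pmatrix}\in\mathbb{C}^{2\times 2}$. $i$ is the imaginary unit of $\mathbb{C}$. For an element $c$ and a matrix $M$, $cM$ (resp. $Mc$) denotes the matrix with entries $cM_{jk}$ (resp. $M_{jk}c$). *)

(* Defs.v *)
(* The complex Clifford algebra C_3 = C{e1,e2,e3} (e_j^2 = -1,
   e_j e_k = - e_k e_j) is built concretely: an element is the family of its
   coefficients on the blades e_A, A a subset of {e1,e2,e3} (indices 0,1,2 of 'I_3),
   and the product is the standard blade product
     e_A e_B = (-1)^(#{(i,j) : i in A, j in B, j < i} + |A /\ B|) e_(A symdiff B). *)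
From HB Require Import structures.
From mathcomp Require Import all_boot all_order all_algebra.
Set Implicit Arguments. Unset Strict Implicit. Unset Printing Implicit Defensive.
Import Order.TTheory GRing.Theory Num.Theory.
Local Open Scope ring_scope.

Section Clifford3.
Variable C : numClosedFieldType.

Notation idx := {set 'I_3}.
Definition cl3 := {ffun idx -> C}.
HB.instance Definition _ := GRing.Zmodule.copy cl3 {ffun idx -> C}.
Definition clscale (c : C) (x : cl3) : cl3 := [ffun A => c * x A].

Definition i1 : 'I_3 := inord 0.
Definition i2 : 'I_3 := inord 1.
Definition i3 : 'I_3 := inord 2.

Definition symd (A B : idx) : idx := (A :\: B) :|: (B :\: A).

Definition blade_sign (A B : idx) : C :=
  (-1) ^+ (#|[set p : ('I_3 * 'I_3)%type | (p.1 \in A) && (p.2 \in B) && ((p.2 < p.1)%N) ]|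
           + #|A :&: B|).

Definition clmul (x y : cl3) : cl3 :=
  [ffun S => \sum_(A : idx) blade_sign A (symd A S) * x A * y (symd A S)].

Definition clsc (c : C) : cl3 := [ffun A => if A == set0 then c else 0].
Definition blade (A : idx) : cl3 := [ffun B => if B == A then 1 else 0].

Definition e1 : cl3 := blade [set i1].
Definition e2 : cl3 := blade [set i2].
Definition e3 : cl3 := blade [set i3].
Definition e12 : cl3 := blade [set i1; i2].
Definition e123 : cl3 := blade [set i1; i2; i3].

Definition in_C2 (x : cl3) : Prop :=
  forall A : idx, ~~ (A \subset [set i1; i2]) -> x A = 0.

Definition clmxmul m n p (A : 'M[cl3]_(m, n)) (B : 'M[cl3]_(n, p)) : 'M[cl3]_(m, p) :=
  \matrix_(i, j) \sum_k clmul (A i k) (B k j).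
Definition clmx1 n : 'M[cl3]_n := \matrix_(i, j) if i == j then clsc 1 else 0.
Definition clscmx n (c : cl3) : 'M[cl3]_n := \matrix_(i, j) if i == j then c else 0.
Definition cllsc m n (c : cl3) (M : 'M[cl3]_(m, n)) : 'M[cl3]_(m, n) := map_mx (clmul c) M.
Definition clrsc m n (M : 'M[cl3]_(m, n)) (c : cl3) : 'M[cl3]_(m, n) :=
  map_mx (fun x => clmul x c) M.

Definition mx2 (T : Type) (a b c d : T) : 'M[T]_2 :=
  \matrix_(i < 2, j < 2)
    if (i == 0 :> nat) then (if (j == 0 :> nat) then a else b)
    else (if (j == 0 :> nat) then c else d).

Definition half m n (M : 'M[cl3]_(m, n)) : 'M[cl3]_(m, n) := map_mx (clscale 2^-1) M.

Definition P2 : 'M[cl3]_2 :=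
  half (mx2 (clsc 1 - clscale 'i e1) (e2 + clscale 'i e12) (- e2 + clscale 'i e12) (clsc 1 + clscale 'i e1)).

Definition P3 : 'M[cl3]_(2 + 2) :=
  half (block_mx (cllsc (clsc 1 + e123) P2) (- cllsc (clsc 1 - e123) P2)
                 (cllsc (clsc 1 - e123) P2) (cllsc (clsc 1 + e123) P2)).

(* P3' with P2^{-1} = P2 (the theorem also asserts P2 * P2 = 1) *)
Definition P3' : 'M[cl3]_(2 + 2) :=
  half (block_mx (clrsc P2 (clsc 1 + e123)) (clrsc P2 (clsc 1 - e123))
                 (- clrsc P2 (clsc 1 - e123)) (clrsc P2 (clsc 1 + e123))).

Definition Dmat (a abar : cl3) : 'M[cl3]_(2 + 2) :=
  block_mx (clscmx 2 a) 0 0 (clscmx 2 abar).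

Definition phi2 (b : cl3) : 'M[C]_2 :=
  let b0 := b set0 in let b1 := b [set i1] in
  let b2 := b [set i2] in let b3 := b [set i1; i2] in
  mx2 (b0 + b1 * 'i) (- (b2 + b3 * 'i)) (b2 - b3 * 'i) (b0 - b1 * 'i).

End Clifford3.

(* Main.v *)
Require Import Defs.
From HB Require Import structures.
From mathcomp Require Import all_boot all_order all_algebra.
From mathcomp Require Import ring.
Set Implicit Arguments. Unset Strict Implicit. Unset Printing Implicit Defensive.
Import Order.TTheory GRing.Theory Num.Theory.
Local Open Scope ring_scope.

Lemma v1 : (i1 : nat) = 0%N. Proof. by rewrite /i1 inordK. Qed.
Lemma v2 : (i2 : nat) = 1%N. Proof. by rewrite /i2 inordK. Qed.
Lemma v3 : (i3 : nat) = 2%N. Proof. by rewrite /i3 inordK. Qed.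
Lemma i12 : (i1 == i2) = false. Proof. by rewrite -val_eqE /= v1 v2. Qed.
Lemma i13 : (i1 == i3) = false. Proof. by rewrite -val_eqE /= v1 v3. Qed.
Lemma i23 : (i2 == i3) = false. Proof. by rewrite -val_eqE /= v2 v3. Qed.
Lemma i21 : (i2 == i1) = false. Proof. by rewrite eq_sym i12. Qed.
Lemma i31 : (i3 == i1) = false. Proof. by rewrite eq_sym i13. Qed.
Lemma i32 : (i3 == i2) = false. Proof. by rewrite eq_sym i23. Qed.
Definition ineq := (i12, i13, i23, i21, i31, i32, eqxx).

Lemma ord3 (P : 'I_3 -> Prop) : P i1 -> P i2 -> P i3 -> forall x, P x.
Proof.
move=> p1 p2 p3 [[|[|[|n]]] H] //.
- by have -> : Ordinal H = i1 by apply: val_inj; rewrite /= v1.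
- by have -> : Ordinal H = i2 by apply: val_inj; rewrite /= v2.
- by have -> : Ordinal H = i3 by apply: val_inj; rewrite /= v3.
Qed.

Lemma big3 (R : Type) (idx : R) (op : Monoid.law idx) (F : 'I_3 -> R) :
  \big[op/idx]_(i < 3) F i = op (F i1) (op (F i2) (F i3)).
Proof.
rewrite !big_ord_recl big_ord0 Monoid.mulm1.
have -> : (ord0 : 'I_3) = i1 by apply: val_inj; rewrite /= v1.
congr (op _ (op _ _)); congr F; apply: val_inj => /=; by rewrite /bump ?v1 ?v2 ?v3.
Qed.

Definition canon (b1 b2 b3 : bool) : {set 'I_3} :=
  [set x | [|| b1 && (x == i1), b2 && (x == i2) | b3 && (x == i3)]].

Lemma in_canon1 a b c : (i1 \in canon a b c) = a.
Proof. by rewrite inE !ineq; case: a; case: b; case: c. Qed.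
Lemma in_canon2 a b c : (i2 \in canon a b c) = b.
Proof. by rewrite inE !ineq; case: a; case: b; case: c. Qed.
Lemma in_canon3 a b c : (i3 \in canon a b c) = c.
Proof. by rewrite inE !ineq; case: a; case: b; case: c. Qed.
Definition in_canon := (in_canon1, in_canon2, in_canon3).

Lemma eq_sets (A B : {set 'I_3}) :
  (A == B) = [&& (i1 \in A) == (i1 \in B), (i2 \in A) == (i2 \in B) & (i3 \in A) == (i3 \in B)].
Proof.
apply/eqP/idP => [->|/and3P [/eqP h1 /eqP h2 /eqP h3]]; first by rewrite !eqxx.
by apply/setP; apply: ord3.
Qed.

Lemma setbits (A : {set 'I_3}) : A = canon (i1 \in A) (i2 \in A) (i3 \in A).
Proof. by apply/eqP; rewrite eq_sets !in_canon !eqxx. Qed.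

Lemma in_symd x (A B : {set 'I_3}) : (x \in symd A B) = (x \in A) (+) (x \in B).
Proof. by rewrite /symd !inE; case: (x \in A); case: (x \in B). Qed.

Lemma sign_bits (C : numClosedFieldType) (A B : {set 'I_3}) :
  blade_sign C A B = (-1) ^+ (((i2 \in A) && (i1 \in B)) + ((i3 \in A) && (i1 \in B))
    + ((i3 \in A) && (i2 \in B)) + ((i1 \in A) && (i1 \in B)) + ((i2 \in A) && (i2 \in B))
    + ((i3 \in A) && (i3 \in B)))%N.
Proof.
rewrite /blade_sign; congr (_ ^+ _).
have -> : #|[set p : ('I_3 * 'I_3)%type | (p.1 \in A) && (p.2 \in B) && ((p.2 < p.1)%N)]|
   = (\sum_(i < 3) \sum_(j < 3) ((i \in A) && (j \in B) && (j < i)%N : nat))%N.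
  rewrite pair_big /= -sum1_card big_mkcond /=; apply: eq_bigr => p _; rewrite inE.
  by case: (_ && _).
have -> : #|A :&: B| = (\sum_(i < 3) ((i \in A) && (i \in B) : nat))%N.
  rewrite -sum1_card big_mkcond /=; apply: eq_bigr => p _; rewrite inE.
  by case: (_ && _).
rewrite !big3 !v1 !v2 !v3 /=.
by case: (i1 \in A); case: (i2 \in A); case: (i3 \in A);
   case: (i1 \in B); case: (i2 \in B); case: (i3 \in B).
Qed.

Section CL.
Variable C : numClosedFieldType.
Local Notation cl := (cl3 C).

Lemma sum_sets (F : {set 'I_3} -> C) :
  \sum_(A : {set 'I_3}) F A =
  \sum_(b1 : bool) \sum_(b2 : bool) \sum_(b3 : bool) F (canon b1 b2 b3).
Proof.
rewrite (reindex (fun b : bool * bool * bool => canon b.1.1 b.1.2 b.2)) /=.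
  rewrite -(pair_big xpredT xpredT (fun (q : bool * bool) b3 => F (canon q.1 q.2 b3))) /=.
  rewrite -(pair_big xpredT xpredT (fun b1 b2 => \sum_(b3 : bool) F (canon b1 b2 b3))) /=.
  by [].
exists (fun A : {set 'I_3} => (i1 \in A, i2 \in A, i3 \in A)) => [[[a b] c]|A] _ /=.
  by rewrite !in_canon.
by rewrite -setbits.
Qed.

Definition sel (b1 b2 b3 : bool) (c0 c1 c2 c3 c12 c13 c23 c123 : C) : C :=
  if b1 then (if b2 then (if b3 then c123 else c12) else (if b3 then c13 else c1))
  else (if b2 then (if b3 then c23 else c2) else (if b3 then c3 else c0)).

Definition cl8 (c0 c1 c2 c3 c12 c13 c23 c123 : C) : cl :=
  [ffun A : {set 'I_3} => sel (i1 \in A) (i2 \in A) (i3 \in A) c0 c1 c2 c3 c12 c13 c23 c123].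

Lemma cl8_eta (x : cl) : x = cl8 (x (canon false false false)) (x (canon true false false))
  (x (canon false true false)) (x (canon false false true)) (x (canon true true false))
  (x (canon true false true)) (x (canon false true true)) (x (canon true true true)).
Proof.
apply/ffunP => A; rewrite ffunE {1}(setbits A).
by case: (i1 \in A); case: (i2 \in A); case: (i3 \in A).
Qed.

Lemma cl8_inj x0 x1 x2 x3 x12 x13 x23 x123 y0 y1 y2 y3 y12 y13 y23 y123 :
  cl8 x0 x1 x2 x3 x12 x13 x23 x123 = cl8 y0 y1 y2 y3 y12 y13 y23 y123 ->
  [/\ x0 = y0, x1 = y1, x2 = y2, x3 = y3 & [/\ x12 = y12, x13 = y13, x23 = y23 & x123 = y123]].
Proof.
move=> e.
have h a b c : sel a b c x0 x1 x2 x3 x12 x13 x23 x123 = sel a b c y0 y1 y2 y3 y12 y13 y23 y123.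
  by move: (congr1 (fun f : cl => f (canon a b c)) e) => /=; rewrite !ffunE !in_canon.
by split; [exact: (h false false false)|exact: (h true false false)|exact: (h false true false)
  |exact: (h false false true)|split; [exact: (h true true false)|exact: (h true false true)
  |exact: (h false true true)|exact: (h true true true)]].
Qed.

Lemma cl8_add x0 x1 x2 x3 x12 x13 x23 x123 y0 y1 y2 y3 y12 y13 y23 y123 :
  cl8 x0 x1 x2 x3 x12 x13 x23 x123 + cl8 y0 y1 y2 y3 y12 y13 y23 y123 =
  cl8 (x0 + y0) (x1 + y1) (x2 + y2) (x3 + y3) (x12 + y12) (x13 + y13) (x23 + y23) (x123 + y123).
Proof.
apply/ffunP => A; rewrite !ffunE.
by case: (i1 \in A); case: (i2 \in A); case: (i3 \in A).
Qed.

Lemma cl8_opp x0 x1 x2 x3 x12 x13 x23 x123 :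
  - cl8 x0 x1 x2 x3 x12 x13 x23 x123 =
  cl8 (- x0) (- x1) (- x2) (- x3) (- x12) (- x13) (- x23) (- x123).
Proof.
apply/ffunP => A; rewrite !ffunE.
by case: (i1 \in A); case: (i2 \in A); case: (i3 \in A).
Qed.

Lemma cl8_scale c x0 x1 x2 x3 x12 x13 x23 x123 :
  clscale c (cl8 x0 x1 x2 x3 x12 x13 x23 x123) =
  cl8 (c * x0) (c * x1) (c * x2) (c * x3) (c * x12) (c * x13) (c * x23) (c * x123).
Proof.
apply/ffunP => A; rewrite !ffunE.
by case: (i1 \in A); case: (i2 \in A); case: (i3 \in A).
Qed.

Lemma cl8_0 : (0 : cl) = cl8 0 0 0 0 0 0 0 0.
Proof.
apply/ffunP => A; rewrite !ffunE.
by case: (i1 \in A); case: (i2 \in A); case: (i3 \in A).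
Qed.

Lemma cl8_sc c : clsc c = cl8 c 0 0 0 0 0 0 0.
Proof.
apply/ffunP => A; rewrite !ffunE (eq_sets A set0) !inE.
by case: (i1 \in A); case: (i2 \in A); case: (i3 \in A).
Qed.


Lemma cl8_e1 : e1 C = cl8 0 1 0 0 0 0 0 0. Proof. apply/ffunP => A; rewrite !ffunE eq_sets !inE !ineq;
  by case: (i1 \in A); case: (i2 \in A); case: (i3 \in A). Qed.
Lemma cl8_e2 : e2 C = cl8 0 0 1 0 0 0 0 0. Proof. apply/ffunP => A; rewrite !ffunE eq_sets !inE !ineq;
  by case: (i1 \in A); case: (i2 \in A); case: (i3 \in A). Qed.
Lemma cl8_e12 : e12 C = cl8 0 0 0 0 1 0 0 0. Proof. apply/ffunP => A; rewrite !ffunE eq_sets !inE !ineq;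
  by case: (i1 \in A); case: (i2 \in A); case: (i3 \in A). Qed.
Lemma cl8_e123 : e123 C = cl8 0 0 0 0 0 0 0 1. Proof. apply/ffunP => A; rewrite !ffunE eq_sets !inE !ineq;
  by case: (i1 \in A); case: (i2 \in A); case: (i3 \in A). Qed.

Lemma cl8_mul x0 x1 x2 x3 x12 x13 x23 x123 y0 y1 y2 y3 y12 y13 y23 y123 :
  clmul (cl8 x0 x1 x2 x3 x12 x13 x23 x123) (cl8 y0 y1 y2 y3 y12 y13 y23 y123) =
  cl8 (x0 * y0 - x1 * y1 - x2 * y2 - x3 * y3 - x12 * y12 - x13 * y13 - x23 * y23 + x123 * y123)
  (x0 * y1 + x1 * y0 + x2 * y12 + x3 * y13 - x12 * y2 - x13 * y3 - x23 * y123 - x123 * y23)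
  (x0 * y2 - x1 * y12 + x2 * y0 + x3 * y23 + x12 * y1 + x13 * y123 - x23 * y3 + x123 * y13)
  (x0 * y3 - x1 * y13 - x2 * y23 + x3 * y0 - x12 * y123 + x13 * y1 + x23 * y2 - x123 * y12)
  (x0 * y12 + x1 * y2 - x2 * y1 - x3 * y123 + x12 * y0 + x13 * y23 - x23 * y13 - x123 * y3)
  (x0 * y13 + x1 * y3 + x2 * y123 - x3 * y1 - x12 * y23 + x13 * y0 + x23 * y12 + x123 * y2)
  (x0 * y23 - x1 * y123 + x2 * y3 - x3 * y2 + x12 * y13 - x13 * y12 + x23 * y0 - x123 * y1)
  (x0 * y123 + x1 * y23 - x2 * y13 + x3 * y12 + x12 * y3 - x13 * y2 + x23 * y1 + x123 * y0).
Proof.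
apply/ffunP => S; rewrite /clmul ffunE sum_sets.
under eq_bigr do under eq_bigr do under eq_bigr do
  rewrite sign_bits !ffunE !in_symd !in_canon.
rewrite ffunE !big_bool /=.
case: (i1 \in S); case: (i2 \in S); case: (i3 \in S); rewrite /=; ring.
Qed.

End CL.

Section Main.
Variable C : numClosedFieldType.

Lemma two : (2 : C) != 0. Proof. by rewrite pnatr_eq0. Qed.

Lemma claim1 : clmxmul (P2 C) (P2 C) = clmx1 C 2.
Proof.
rewrite /clmxmul /clmx1 /P2 /half /mx2.
apply/matrixP => i j; rewrite !mxE !big_ord_recl big_ord0 !mxE.
case: i => [[|[|//]] Hi]; case: j => [[|[|//]] Hj] /=.
all: rewrite ?cl8_sc ?cl8_e1 ?cl8_e2 ?cl8_e12 ?cl8_e123 ?cl8_0.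
all: rewrite ?(cl8_add, cl8_opp, cl8_scale, cl8_mul).
all: by congr cl8; field: (mulCii C).
Qed.

Definition M3 : 'M[cl3 C]_(2 + 2) :=
  block_mx (mx2 (cl8 ((2^-1 * 2^-1)) (- ((2^-1 * 2^-1) * 'i)) (0) (0) (0) (0) ((2^-1 * 2^-1) * 'i) ((2^-1 * 2^-1))) (cl8 (0) (0) ((2^-1 * 2^-1)) (- ((2^-1 * 2^-1) * 'i)) ((2^-1 * 2^-1) * 'i) ((2^-1 * 2^-1)) (0) (0))
   (cl8 (0) (0) (- (2^-1 * 2^-1)) (- ((2^-1 * 2^-1) * 'i)) ((2^-1 * 2^-1) * 'i) (- (2^-1 * 2^-1)) (0) (0)) (cl8 ((2^-1 * 2^-1)) ((2^-1 * 2^-1) * 'i) (0) (0) (0) (0) (- ((2^-1 * 2^-1) * 'i)) ((2^-1 * 2^-1))))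
  (mx2 (cl8 (- (2^-1 * 2^-1)) ((2^-1 * 2^-1) * 'i) (0) (0) (0) (0) ((2^-1 * 2^-1) * 'i) ((2^-1 * 2^-1))) (cl8 (0) (0) (- (2^-1 * 2^-1)) (- ((2^-1 * 2^-1) * 'i)) (- ((2^-1 * 2^-1) * 'i)) ((2^-1 * 2^-1)) (0) (0))
   (cl8 (0) (0) ((2^-1 * 2^-1)) (- ((2^-1 * 2^-1) * 'i)) (- ((2^-1 * 2^-1) * 'i)) (- (2^-1 * 2^-1)) (0) (0)) (cl8 (- (2^-1 * 2^-1)) (- ((2^-1 * 2^-1) * 'i)) (0) (0) (0) (0) (- ((2^-1 * 2^-1) * 'i)) ((2^-1 * 2^-1))))
  (mx2 (cl8 ((2^-1 * 2^-1)) (- ((2^-1 * 2^-1) * 'i)) (0) (0) (0) (0) (- ((2^-1 * 2^-1) * 'i)) (- (2^-1 * 2^-1))) (cl8 (0) (0) ((2^-1 * 2^-1)) ((2^-1 * 2^-1) * 'i) ((2^-1 * 2^-1) * 'i) (- (2^-1 * 2^-1)) (0) (0))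
   (cl8 (0) (0) (- (2^-1 * 2^-1)) ((2^-1 * 2^-1) * 'i) ((2^-1 * 2^-1) * 'i) ((2^-1 * 2^-1)) (0) (0)) (cl8 ((2^-1 * 2^-1)) ((2^-1 * 2^-1) * 'i) (0) (0) (0) (0) ((2^-1 * 2^-1) * 'i) (- (2^-1 * 2^-1))))
  (mx2 (cl8 ((2^-1 * 2^-1)) (- ((2^-1 * 2^-1) * 'i)) (0) (0) (0) (0) ((2^-1 * 2^-1) * 'i) ((2^-1 * 2^-1))) (cl8 (0) (0) ((2^-1 * 2^-1)) (- ((2^-1 * 2^-1) * 'i)) ((2^-1 * 2^-1) * 'i) ((2^-1 * 2^-1)) (0) (0))
   (cl8 (0) (0) (- (2^-1 * 2^-1)) (- ((2^-1 * 2^-1) * 'i)) ((2^-1 * 2^-1) * 'i) (- (2^-1 * 2^-1)) (0) (0)) (cl8 ((2^-1 * 2^-1)) ((2^-1 * 2^-1) * 'i) (0) (0) (0) (0) (- ((2^-1 * 2^-1) * 'i)) ((2^-1 * 2^-1)))).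
Definition M3' : 'M[cl3 C]_(2 + 2) :=
  block_mx (mx2 (cl8 ((2^-1 * 2^-1)) (- ((2^-1 * 2^-1) * 'i)) (0) (0) (0) (0) ((2^-1 * 2^-1) * 'i) ((2^-1 * 2^-1))) (cl8 (0) (0) ((2^-1 * 2^-1)) (- ((2^-1 * 2^-1) * 'i)) ((2^-1 * 2^-1) * 'i) ((2^-1 * 2^-1)) (0) (0))
   (cl8 (0) (0) (- (2^-1 * 2^-1)) (- ((2^-1 * 2^-1) * 'i)) ((2^-1 * 2^-1) * 'i) (- (2^-1 * 2^-1)) (0) (0)) (cl8 ((2^-1 * 2^-1)) ((2^-1 * 2^-1) * 'i) (0) (0) (0) (0) (- ((2^-1 * 2^-1) * 'i)) ((2^-1 * 2^-1))))
  (mx2 (cl8 ((2^-1 * 2^-1)) (- ((2^-1 * 2^-1) * 'i)) (0) (0) (0) (0) (- ((2^-1 * 2^-1) * 'i)) (- (2^-1 * 2^-1))) (cl8 (0) (0) ((2^-1 * 2^-1)) ((2^-1 * 2^-1) * 'i) ((2^-1 * 2^-1) * 'i) (- (2^-1 * 2^-1)) (0) (0))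
   (cl8 (0) (0) (- (2^-1 * 2^-1)) ((2^-1 * 2^-1) * 'i) ((2^-1 * 2^-1) * 'i) ((2^-1 * 2^-1)) (0) (0)) (cl8 ((2^-1 * 2^-1)) ((2^-1 * 2^-1) * 'i) (0) (0) (0) (0) ((2^-1 * 2^-1) * 'i) (- (2^-1 * 2^-1))))
  (mx2 (cl8 (- (2^-1 * 2^-1)) ((2^-1 * 2^-1) * 'i) (0) (0) (0) (0) ((2^-1 * 2^-1) * 'i) ((2^-1 * 2^-1))) (cl8 (0) (0) (- (2^-1 * 2^-1)) (- ((2^-1 * 2^-1) * 'i)) (- ((2^-1 * 2^-1) * 'i)) ((2^-1 * 2^-1)) (0) (0))
   (cl8 (0) (0) ((2^-1 * 2^-1)) (- ((2^-1 * 2^-1) * 'i)) (- ((2^-1 * 2^-1) * 'i)) (- (2^-1 * 2^-1)) (0) (0)) (cl8 (- (2^-1 * 2^-1)) (- ((2^-1 * 2^-1) * 'i)) (0) (0) (0) (0) (- ((2^-1 * 2^-1) * 'i)) ((2^-1 * 2^-1))))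
  (mx2 (cl8 ((2^-1 * 2^-1)) (- ((2^-1 * 2^-1) * 'i)) (0) (0) (0) (0) ((2^-1 * 2^-1) * 'i) ((2^-1 * 2^-1))) (cl8 (0) (0) ((2^-1 * 2^-1)) (- ((2^-1 * 2^-1) * 'i)) ((2^-1 * 2^-1) * 'i) ((2^-1 * 2^-1)) (0) (0))
   (cl8 (0) (0) (- (2^-1 * 2^-1)) (- ((2^-1 * 2^-1) * 'i)) ((2^-1 * 2^-1) * 'i) (- (2^-1 * 2^-1)) (0) (0)) (cl8 ((2^-1 * 2^-1)) ((2^-1 * 2^-1) * 'i) (0) (0) (0) (0) (- ((2^-1 * 2^-1) * 'i)) ((2^-1 * 2^-1)))).

Lemma P3E : P3 C = M3.
Proof.
rewrite /P3 /M3.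
apply/matrixP => i j.
case: (split_ordP i) => i0 ->; case: (split_ordP j) => j0 ->.
all: rewrite /Defs.half ?(mxE, block_mxEul, block_mxEur, block_mxEdl, block_mxEdr).
all: case: i0 => [[|[|//]] Hi]; case: j0 => [[|[|//]] Hj].
all: rewrite /cllsc /clrsc /P2 /Defs.half /mx2 ?mxE /=.
all: rewrite ?cl8_sc ?cl8_e1 ?cl8_e2 ?cl8_e12 ?cl8_e123 ?cl8_0.
all: rewrite ?(cl8_add, cl8_opp, cl8_scale, cl8_mul).
all: by congr cl8; field: (mulCii C).
Qed.
Lemma P3'E : P3' C = M3'.
Proof.
rewrite /P3' /M3'.
apply/matrixP => i j.
case: (split_ordP i) => i0 ->; case: (split_ordP j) => j0 ->.
all: rewrite /Defs.half ?(mxE, block_mxEul, block_mxEur, block_mxEdl, block_mxEdr).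
all: case: i0 => [[|[|//]] Hi]; case: j0 => [[|[|//]] Hj].
all: rewrite /cllsc /clrsc /P2 /Defs.half /mx2 ?mxE /=.
all: rewrite ?cl8_sc ?cl8_e1 ?cl8_e2 ?cl8_e12 ?cl8_e123 ?cl8_0.
all: rewrite ?(cl8_add, cl8_opp, cl8_scale, cl8_mul).
all: by congr cl8; field: (mulCii C).
Qed.
Lemma claim2 : clmxmul (P3 C) (P3' C) = clmx1 C (2 + 2).
Proof.
rewrite P3E P3'E /clmxmul /clmx1 /M3 /M3'.
apply/matrixP => i j; rewrite !mxE big_split_ord /= !big_ord_recl !big_ord0.
case: (split_ordP i) => i0 ->; case: (split_ordP j) => j0 ->.
all: rewrite ?(mxE, block_mxEul, block_mxEur, block_mxEdl, block_mxEdr).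
all: case: i0 => [[|[|//]] Hi]; case: j0 => [[|[|//]] Hj].
all: rewrite /mx2 ?mxE /=.
all: rewrite ?cl8_sc ?cl8_0.
all: rewrite ?(cl8_add, cl8_opp, cl8_scale, cl8_mul).
all: by congr cl8; field: (mulCii C).
Qed.
Lemma claim3 : clmxmul (P3' C) (P3 C) = clmx1 C (2 + 2).
Proof.
rewrite P3E P3'E /clmxmul /clmx1 /M3 /M3'.
apply/matrixP => i j; rewrite !mxE big_split_ord /= !big_ord_recl !big_ord0.
case: (split_ordP i) => i0 ->; case: (split_ordP j) => j0 ->.
all: rewrite ?(mxE, block_mxEul, block_mxEur, block_mxEdl, block_mxEdr).
all: case: i0 => [[|[|//]] Hi]; case: j0 => [[|[|//]] Hj].
all: rewrite /mx2 ?mxE /=.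
all: rewrite ?cl8_sc ?cl8_0.
all: rewrite ?(cl8_add, cl8_opp, cl8_scale, cl8_mul).
all: by congr cl8; field: (mulCii C).
Qed.
Lemma clmulx0 (x : cl3 C) : clmul x 0 = 0.
Proof. apply/ffunP => S; rewrite !ffunE big1 // => A _. by rewrite ffunE; ring. Qed.
Lemma clmul0x (x : cl3 C) : clmul 0 x = 0.
Proof. apply/ffunP => S; rewrite !ffunE big1 // => A _; by rewrite ffunE; ring. Qed.

Lemma phi2_cl8 (x0 x1 x2 x3 x12 x13 x23 x123 : C) :
  phi2 (cl8 x0 x1 x2 x3 x12 x13 x23 x123) =
  mx2 (x0 + x1 * 'i) (- (x2 + x12 * 'i)) (x2 - x12 * 'i) (x0 - x1 * 'i).
Proof. by rewrite /phi2 !ffunE !inE !ineq. Qed.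

Lemma clmxmulE m n p (A : 'M[cl3 C]_(m, n)) (B : 'M[cl3 C]_(n, p)) i j :
  clmxmul A B i j = \sum_k clmul (A i k) (B k j).
Proof. by rewrite /clmxmul mxE. Qed.

Definition NN (p0 p1 p2 p12 r0 r1 r2 r12 : C) : 'M[cl3 C]_(2 + 2) :=
  block_mx (mx2 (cl8 ((2^-1 * 2^-1) * (p0 + 'i * p1 + r0 + 'i * r1)) ((2^-1 * 2^-1) * (- ('i * p0) + p1 - 'i * r0 + r1)) ((2^-1 * 2^-1) * ('i * p12 + p2 + 'i * r12 + r2)) ((2^-1 * 2^-1) * (- (p12) + 'i * p2 - r12 + 'i * r2)) ((2^-1 * 2^-1) * (p12 - 'i * p2 + r12 - 'i * r2)) ((2^-1 * 2^-1) * ('i * p12 + p2 + 'i * r12 + r2)) ((2^-1 * 2^-1) * ('i * p0 - p1 + 'i * r0 - r1)) ((2^-1 * 2^-1) * (p0 + 'i * p1 + r0 + 'i * r1)))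
    (cl8 ((2^-1 * 2^-1) * (- ('i * p12) - p2 - 'i * r12 - r2)) ((2^-1 * 2^-1) * (p12 - 'i * p2 + r12 - 'i * r2)) ((2^-1 * 2^-1) * (p0 + 'i * p1 + r0 + 'i * r1)) ((2^-1 * 2^-1) * (- ('i * p0) + p1 - 'i * r0 + r1)) ((2^-1 * 2^-1) * ('i * p0 - p1 + 'i * r0 - r1)) ((2^-1 * 2^-1) * (p0 + 'i * p1 + r0 + 'i * r1)) ((2^-1 * 2^-1) * (- (p12) + 'i * p2 - r12 + 'i * r2)) ((2^-1 * 2^-1) * (- ('i * p12) - p2 - 'i * r12 - r2)))
    (cl8 ((2^-1 * 2^-1) * (- ('i * p12) + p2 - 'i * r12 + r2)) ((2^-1 * 2^-1) * (- (p12) - 'i * p2 - r12 - 'i * r2)) ((2^-1 * 2^-1) * (- (p0) + 'i * p1 - r0 + 'i * r1)) ((2^-1 * 2^-1) * (- ('i * p0) - p1 - 'i * r0 - r1)) ((2^-1 * 2^-1) * ('i * p0 + p1 + 'i * r0 + r1)) ((2^-1 * 2^-1) * (- (p0) + 'i * p1 - r0 + 'i * r1)) ((2^-1 * 2^-1) * (p12 + 'i * p2 + r12 + 'i * r2)) ((2^-1 * 2^-1) * (- ('i * p12) + p2 - 'i * r12 + r2)))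
    (cl8 ((2^-1 * 2^-1) * (p0 - 'i * p1 + r0 - 'i * r1)) ((2^-1 * 2^-1) * ('i * p0 + p1 + 'i * r0 + r1)) ((2^-1 * 2^-1) * (- ('i * p12) + p2 - 'i * r12 + r2)) ((2^-1 * 2^-1) * (- (p12) - 'i * p2 - r12 - 'i * r2)) ((2^-1 * 2^-1) * (p12 + 'i * p2 + r12 + 'i * r2)) ((2^-1 * 2^-1) * (- ('i * p12) + p2 - 'i * r12 + r2)) ((2^-1 * 2^-1) * (- ('i * p0) - p1 - 'i * r0 - r1)) ((2^-1 * 2^-1) * (p0 - 'i * p1 + r0 - 'i * r1))))
  (mx2 (cl8 ((2^-1 * 2^-1) * (- (p0) - 'i * p1 - r0 - 'i * r1)) ((2^-1 * 2^-1) * ('i * p0 - p1 + 'i * r0 - r1)) ((2^-1 * 2^-1) * (- ('i * p12) - p2 - 'i * r12 - r2)) ((2^-1 * 2^-1) * (- (p12) + 'i * p2 - r12 + 'i * r2)) ((2^-1 * 2^-1) * (- (p12) + 'i * p2 - r12 + 'i * r2)) ((2^-1 * 2^-1) * ('i * p12 + p2 + 'i * r12 + r2)) ((2^-1 * 2^-1) * ('i * p0 - p1 + 'i * r0 - r1)) ((2^-1 * 2^-1) * (p0 + 'i * p1 + r0 + 'i * r1)))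
    (cl8 ((2^-1 * 2^-1) * ('i * p12 + p2 + 'i * r12 + r2)) ((2^-1 * 2^-1) * (- (p12) + 'i * p2 - r12 + 'i * r2)) ((2^-1 * 2^-1) * (- (p0) - 'i * p1 - r0 - 'i * r1)) ((2^-1 * 2^-1) * (- ('i * p0) + p1 - 'i * r0 + r1)) ((2^-1 * 2^-1) * (- ('i * p0) + p1 - 'i * r0 + r1)) ((2^-1 * 2^-1) * (p0 + 'i * p1 + r0 + 'i * r1)) ((2^-1 * 2^-1) * (- (p12) + 'i * p2 - r12 + 'i * r2)) ((2^-1 * 2^-1) * (- ('i * p12) - p2 - 'i * r12 - r2)))
    (cl8 ((2^-1 * 2^-1) * ('i * p12 - p2 + 'i * r12 - r2)) ((2^-1 * 2^-1) * (p12 + 'i * p2 + r12 + 'i * r2)) ((2^-1 * 2^-1) * (p0 - 'i * p1 + r0 - 'i * r1)) ((2^-1 * 2^-1) * (- ('i * p0) - p1 - 'i * r0 - r1)) ((2^-1 * 2^-1) * (- ('i * p0) - p1 - 'i * r0 - r1)) ((2^-1 * 2^-1) * (- (p0) + 'i * p1 - r0 + 'i * r1)) ((2^-1 * 2^-1) * (p12 + 'i * p2 + r12 + 'i * r2)) ((2^-1 * 2^-1) * (- ('i * p12) + p2 - 'i * r12 + r2)))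
    (cl8 ((2^-1 * 2^-1) * (- (p0) + 'i * p1 - r0 + 'i * r1)) ((2^-1 * 2^-1) * (- ('i * p0) - p1 - 'i * r0 - r1)) ((2^-1 * 2^-1) * ('i * p12 - p2 + 'i * r12 - r2)) ((2^-1 * 2^-1) * (- (p12) - 'i * p2 - r12 - 'i * r2)) ((2^-1 * 2^-1) * (- (p12) - 'i * p2 - r12 - 'i * r2)) ((2^-1 * 2^-1) * (- ('i * p12) + p2 - 'i * r12 + r2)) ((2^-1 * 2^-1) * (- ('i * p0) - p1 - 'i * r0 - r1)) ((2^-1 * 2^-1) * (p0 - 'i * p1 + r0 - 'i * r1))))
  (mx2 (cl8 ((2^-1 * 2^-1) * (p0 + 'i * p1 - r0 - 'i * r1)) ((2^-1 * 2^-1) * (- ('i * p0) + p1 + 'i * r0 - r1)) ((2^-1 * 2^-1) * ('i * p12 + p2 - 'i * r12 - r2)) ((2^-1 * 2^-1) * (p12 - 'i * p2 - r12 + 'i * r2)) ((2^-1 * 2^-1) * (p12 - 'i * p2 - r12 + 'i * r2)) ((2^-1 * 2^-1) * (- ('i * p12) - p2 + 'i * r12 + r2)) ((2^-1 * 2^-1) * (- ('i * p0) + p1 + 'i * r0 - r1)) ((2^-1 * 2^-1) * (- (p0) - 'i * p1 + r0 + 'i * r1)))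
    (cl8 ((2^-1 * 2^-1) * (- ('i * p12) - p2 + 'i * r12 + r2)) ((2^-1 * 2^-1) * (p12 - 'i * p2 - r12 + 'i * r2)) ((2^-1 * 2^-1) * (p0 + 'i * p1 - r0 - 'i * r1)) ((2^-1 * 2^-1) * ('i * p0 - p1 - 'i * r0 + r1)) ((2^-1 * 2^-1) * ('i * p0 - p1 - 'i * r0 + r1)) ((2^-1 * 2^-1) * (- (p0) - 'i * p1 + r0 + 'i * r1)) ((2^-1 * 2^-1) * (p12 - 'i * p2 - r12 + 'i * r2)) ((2^-1 * 2^-1) * ('i * p12 + p2 - 'i * r12 - r2)))
    (cl8 ((2^-1 * 2^-1) * (- ('i * p12) + p2 + 'i * r12 - r2)) ((2^-1 * 2^-1) * (- (p12) - 'i * p2 + r12 + 'i * r2)) ((2^-1 * 2^-1) * (- (p0) + 'i * p1 + r0 - 'i * r1)) ((2^-1 * 2^-1) * ('i * p0 + p1 - 'i * r0 - r1)) ((2^-1 * 2^-1) * ('i * p0 + p1 - 'i * r0 - r1)) ((2^-1 * 2^-1) * (p0 - 'i * p1 - r0 + 'i * r1)) ((2^-1 * 2^-1) * (- (p12) - 'i * p2 + r12 + 'i * r2)) ((2^-1 * 2^-1) * ('i * p12 - p2 - 'i * r12 + r2)))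
    (cl8 ((2^-1 * 2^-1) * (p0 - 'i * p1 - r0 + 'i * r1)) ((2^-1 * 2^-1) * ('i * p0 + p1 - 'i * r0 - r1)) ((2^-1 * 2^-1) * (- ('i * p12) + p2 + 'i * r12 - r2)) ((2^-1 * 2^-1) * (p12 + 'i * p2 - r12 - 'i * r2)) ((2^-1 * 2^-1) * (p12 + 'i * p2 - r12 - 'i * r2)) ((2^-1 * 2^-1) * ('i * p12 - p2 - 'i * r12 + r2)) ((2^-1 * 2^-1) * ('i * p0 + p1 - 'i * r0 - r1)) ((2^-1 * 2^-1) * (- (p0) + 'i * p1 + r0 - 'i * r1))))
  (mx2 (cl8 ((2^-1 * 2^-1) * (p0 + 'i * p1 - r0 - 'i * r1)) ((2^-1 * 2^-1) * (- ('i * p0) + p1 + 'i * r0 - r1)) ((2^-1 * 2^-1) * ('i * p12 + p2 - 'i * r12 - r2)) ((2^-1 * 2^-1) * (- (p12) + 'i * p2 + r12 - 'i * r2)) ((2^-1 * 2^-1) * (p12 - 'i * p2 - r12 + 'i * r2)) ((2^-1 * 2^-1) * ('i * p12 + p2 - 'i * r12 - r2)) ((2^-1 * 2^-1) * ('i * p0 - p1 - 'i * r0 + r1)) ((2^-1 * 2^-1) * (p0 + 'i * p1 - r0 - 'i * r1)))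
    (cl8 ((2^-1 * 2^-1) * (- ('i * p12) - p2 + 'i * r12 + r2)) ((2^-1 * 2^-1) * (p12 - 'i * p2 - r12 + 'i * r2)) ((2^-1 * 2^-1) * (p0 + 'i * p1 - r0 - 'i * r1)) ((2^-1 * 2^-1) * (- ('i * p0) + p1 + 'i * r0 - r1)) ((2^-1 * 2^-1) * ('i * p0 - p1 - 'i * r0 + r1)) ((2^-1 * 2^-1) * (p0 + 'i * p1 - r0 - 'i * r1)) ((2^-1 * 2^-1) * (- (p12) + 'i * p2 + r12 - 'i * r2)) ((2^-1 * 2^-1) * (- ('i * p12) - p2 + 'i * r12 + r2)))
    (cl8 ((2^-1 * 2^-1) * (- ('i * p12) + p2 + 'i * r12 - r2)) ((2^-1 * 2^-1) * (- (p12) - 'i * p2 + r12 + 'i * r2)) ((2^-1 * 2^-1) * (- (p0) + 'i * p1 + r0 - 'i * r1)) ((2^-1 * 2^-1) * (- ('i * p0) - p1 + 'i * r0 + r1)) ((2^-1 * 2^-1) * ('i * p0 + p1 - 'i * r0 - r1)) ((2^-1 * 2^-1) * (- (p0) + 'i * p1 + r0 - 'i * r1)) ((2^-1 * 2^-1) * (p12 + 'i * p2 - r12 - 'i * r2)) ((2^-1 * 2^-1) * (- ('i * p12) + p2 + 'i * r12 - r2)))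
    (cl8 ((2^-1 * 2^-1) * (p0 - 'i * p1 - r0 + 'i * r1)) ((2^-1 * 2^-1) * ('i * p0 + p1 - 'i * r0 - r1)) ((2^-1 * 2^-1) * (- ('i * p12) + p2 + 'i * r12 - r2)) ((2^-1 * 2^-1) * (- (p12) - 'i * p2 + r12 + 'i * r2)) ((2^-1 * 2^-1) * (p12 + 'i * p2 - r12 - 'i * r2)) ((2^-1 * 2^-1) * (- ('i * p12) + p2 + 'i * r12 - r2)) ((2^-1 * 2^-1) * (- ('i * p0) - p1 + 'i * r0 + r1)) ((2^-1 * 2^-1) * (p0 - 'i * p1 - r0 + 'i * r1)))).

Lemma NE (p0 p1 p2 p12 r0 r1 r2 r12 : C) :
  clmxmul M3 (Dmat (cl8 p0 p1 p2 (- r12) p12 r2 (- r1) r0)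
                   (cl8 p0 p1 p2 r12 p12 (- r2) r1 (- r0))) = NN p0 p1 p2 p12 r0 r1 r2 r12.
Proof.
rewrite /Dmat /M3 /NN.
apply/matrixP => i j.
case: (split_ordP i) => i0 ->; case: (split_ordP j) => j0 ->.
all: rewrite clmxmulE big_split_ord /= !big_ord_recl !big_ord0.
all: rewrite ?(block_mxEul, block_mxEur, block_mxEdl, block_mxEdr, mxE).
all: case: i0 => [[|[|//]] Hi]; case: j0 => [[|[|//]] Hj].
all: rewrite /mx2 /clscmx ?mxE /=.
all: rewrite ?clmulx0 ?addr0 ?add0r.
all: rewrite ?(cl8_add, cl8_opp, cl8_scale, cl8_mul).
all: by congr cl8; field: (mulCii C).
Qed.

Lemma claim6 (p0 p1 p2 p12 r0 r1 r2 r12 : C) :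
  let a0 := cl8 p0 p1 p2 0 p12 0 0 0 in
  let a1 := cl8 r0 r1 r2 0 r12 0 0 0 in
  clmxmul (NN p0 p1 p2 p12 r0 r1 r2 r12) M3' =
     block_mx (map_mx (@clsc C) (phi2 a0 + phi2 a1)) 0
              0 (map_mx (@clsc C) (phi2 a0 - phi2 a1)).
Proof.
move=> a0 a1; rewrite /a0 /a1 !phi2_cl8.
rewrite /NN /M3'.
apply/matrixP => i j.
case: (split_ordP i) => i0 ->; case: (split_ordP j) => j0 ->.
all: rewrite clmxmulE big_split_ord /= !big_ord_recl !big_ord0.
all: rewrite ?(block_mxEul, block_mxEur, block_mxEdl, block_mxEdr, mxE).
all: case: i0 => [[|[|//]] Hi]; case: j0 => [[|[|//]] Hj].
all: rewrite /mx2 ?mxE /=.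
all: rewrite ?cl8_sc ?cl8_0.
all: rewrite ?(cl8_add, cl8_opp, cl8_scale, cl8_mul).
all: by congr cl8; field: (mulCii C).
Qed.

Lemma notsub b1 b2 : ~~ (canon b1 b2 true \subset [set i1; i2]).
Proof.
apply/subsetPn; exists i3; first by rewrite in_canon.
by rewrite !inE !ineq.
Qed.

Lemma in_C2_form (x : cl3 C) : in_C2 x ->
  x = cl8 (x (canon false false false)) (x (canon true false false))
          (x (canon false true false)) 0 (x (canon true true false)) 0 0 0.
Proof.
move=> H; rewrite {1}(cl8_eta x).
by rewrite (H _ (notsub false false)) (H _ (notsub true false))
  (H _ (notsub false true)) (H _ (notsub true true)).
Qed.

Lemma in_C2_cl8 (x0 x1 x2 x12 : C) : in_C2 (cl8 x0 x1 x2 0 x12 0 0 0).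
Proof.
move=> A HA; rewrite ffunE.
have -> : i3 \in A.
  apply: contraNT HA => h; apply/subsetP => x; move: x; apply: ord3.
  - by rewrite !inE !ineq.
  - by rewrite !inE !ineq orbT.
  - by rewrite (negbTE h).
by case: (i1 \in A); case: (i2 \in A).
Qed.

Lemma decomp_cl8 (x0 x1 x2 x12 y0 y1 y2 y12 : C) :
  cl8 x0 x1 x2 0 x12 0 0 0 + clmul (cl8 y0 y1 y2 0 y12 0 0 0) (e123 C) =
  cl8 x0 x1 x2 (- y12) x12 y2 (- y1) y0.
Proof. rewrite cl8_e123 cl8_mul cl8_add; congr cl8; ring. Qed.

Lemma decomp_cl8' (x0 x1 x2 x12 y0 y1 y2 y12 : C) :
  cl8 x0 x1 x2 0 x12 0 0 0 - clmul (cl8 y0 y1 y2 0 y12 0 0 0) (e123 C) =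
  cl8 x0 x1 x2 y12 x12 (- y2) y1 (- y0).
Proof. rewrite cl8_e123 cl8_mul cl8_opp cl8_add; congr cl8; ring. Qed.

Lemma claim4 (a : cl3 C) : exists a0 a1 : cl3 C,
     [/\ in_C2 a0, in_C2 a1 & a = a0 + clmul a1 (e123 C)].
Proof.
exists (cl8 (a (canon false false false)) (a (canon true false false))
          (a (canon false true false)) 0 (a (canon true true false)) 0 0 0).
exists (cl8 (a (canon true true true)) (- a (canon false true true))
          (a (canon true false true)) 0 (- a (canon false false true)) 0 0 0).
split; try exact: in_C2_cl8.
by rewrite decomp_cl8 !opprK {1}(cl8_eta a).
Qed.

Lemma claim5 (a0 a1 b0 b1 : cl3 C) : in_C2 a0 -> in_C2 a1 -> in_C2 b0 -> in_C2 b1 ->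
     a0 + clmul a1 (e123 C) = b0 + clmul b1 (e123 C) -> a0 = b0 /\ a1 = b1.
Proof.
move=> h0 h1 h2 h3.
rewrite (in_C2_form h0) (in_C2_form h1) (in_C2_form h2) (in_C2_form h3) !decomp_cl8.
case/cl8_inj => e0 e1 e2 e3 [e4 e5 e6 e7].
by split; congr cl8; rewrite // -[LHS]opprK -[RHS]opprK; congr (- _).
Qed.

End Main.

Theorem theorem12 (C : numClosedFieldType) :
  clmxmul (P2 C) (P2 C) = clmx1 C 2 /\
  clmxmul (P3 C) (P3' C) = clmx1 C (2 + 2) /\
  clmxmul (P3' C) (P3 C) = clmx1 C (2 + 2) /\
  (forall a : cl3 C, exists a0 a1 : cl3 C,
     [/\ in_C2 a0, in_C2 a1 & a = a0 + clmul a1 (e123 C)]) /\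
  (forall a0 a1 b0 b1 : cl3 C, in_C2 a0 -> in_C2 a1 -> in_C2 b0 -> in_C2 b1 ->
     a0 + clmul a1 (e123 C) = b0 + clmul b1 (e123 C) -> a0 = b0 /\ a1 = b1) /\
  (forall a a0 a1 : cl3 C, in_C2 a0 -> in_C2 a1 -> a = a0 + clmul a1 (e123 C) ->
     clmxmul (clmxmul (P3 C) (Dmat a (a0 - clmul a1 (e123 C)))) (P3' C) =
     block_mx (map_mx (@clsc C) (phi2 a0 + phi2 a1)) 0
              0 (map_mx (@clsc C) (phi2 a0 - phi2 a1))).
Proof.
split; first exact: claim1.
split; first exact: claim2.
split; first exact: claim3.
split; first exact: claim4.
split; first exact: claim5.
move=> a a0 a1 h0 h1 ->.
rewrite (in_C2_form h0) (in_C2_form h1) decomp_cl8 decomp_cl8'.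
by rewrite P3E P3'E NE; exact: claim6.
Qed.
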